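(* Let $f:[0,\infty)\to\mathbb{R}$ be differentiable, let $0<a<b<\infty$, and suppose $f'$ is Lebesgue integrable on $[a,b]$. Let $m\in(0,1]$ and $q>1$, and suppose $|f'|^q$ is $(1,m)$-GA-convex on $[0,\max\{a^{1/m},b\}]$. Then \[ \biggl|\frac{b^2f(b)-a^2f(a)}{2}-\int_a^b xf(x)\,dx\biggr|\le\frac{\ln b-\ln a}{2^{1+1/q}}\bigl[L\bigl(a^{3q/(q-1)},b^{3q/(q-1)}\bigr)\bigr]^{1-1/q}\Bigl[|f'(b)|^q+m\bigl|f'(a^{1/m})\bigr|^q\Bigr]^{1/q}. \]
   Context: For $c>0$, $h:[0,c]\to\mathbb{R}$ and $(\alpha,m)\in(0,1]^2$, $h$ is called $(\alpha,m)$-GA-convex on $[0,c]$ if $h\bigl(x^\lambda y^{m(1-\lambda)}\bigr)\le\lambda^\alpha h(x)+m(1-\lambda^\alpha)h(y)$ for all $x,y\in[0,c]$ and all $\lambda\in[0,1]$ (with the convention $0^0=1$). For $x,y>0$, $x\neq y$, the logarithmic mean is $L(x,y)=\frac{y-x}{\ln y-\ln x}$. *)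

(* Defs.v *)
From Stdlib Require Import Reals Lra.
Open Scope R_scope.

(* Real power x^y for x >= 0, with the conventions 0^0 = 1 and 0^y = 0 for y <> 0
   (Stdlib's Rpower is only meaningful for x > 0). *)
Definition rpow (x y : R) : R :=
  if Req_EM_T x 0 then (if Req_EM_T y 0 then 1 else 0) else Rpower x y.

Definition GA_convex (alpha m c : R) (h : R -> R) : Prop :=
  forall x y lam, 0 <= x <= c -> 0 <= y <= c -> 0 <= lam <= 1 ->
    h (rpow x lam * rpow y (m * (1 - lam)))
      <= rpow lam alpha * h x + m * (1 - rpow lam alpha) * h y.

Definition logmean (x y : R) : R := (y - x) / (ln y - ln x).

Definition right_derivative (f : R -> R) (x l : R) : Prop :=
  forall eps, 0 < eps -> exists delta, 0 < delta /\
    forall h, 0 < h < delta -> Rabs ((f (x + h) - f x) / h - l) < eps.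

(* Main.v *)
Require Import Defs.
From Stdlib Require Import Reals Lra.
From Coquelicot Require Import Coquelicot.
Open Scope R_scope.

Lemma rpow_pos x y : 0 < x -> rpow x y = Rpower x y.
Proof. intros H. unfold rpow. destruct (Req_EM_T x 0); [lra|auto]. Qed.

Lemma rpow_0 y : y <> 0 -> rpow 0 y = 0.
Proof. intros H. unfold rpow. destruct (Req_EM_T 0 0); [|lra].
destruct (Req_EM_T y 0); [lra|auto]. Qed.

Lemma Rpower_pos x y : 0 < Rpower x y.
Proof. unfold Rpower. apply exp_pos. Qed.

Lemma rpow_ge0 x y : 0 <= x -> 0 <= rpow x y.
Proof. intros H. unfold rpow. destruct (Req_EM_T x 0).
destruct (Req_EM_T y 0); lra. left; apply Rpower_pos. Qed.

Lemma rpow_eq0 x y : 0 <= x -> y <> 0 -> rpow x y = 0 -> x = 0.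
Proof. intros H Hy E. destruct (Req_EM_T x 0); auto.
rewrite rpow_pos in E by lra. pose proof (Rpower_pos x y). lra. Qed.

Lemma rpow_id1 x : 0 <= x -> rpow x 1 = x.
Proof. intros H. destruct (Req_EM_T x 0). subst. apply rpow_0. lra.
rewrite rpow_pos by lra. apply Rpower_1. lra. Qed.

Lemma Rpower_div x y z : 0 < x -> 0 < y -> Rpower (x / y) z = Rpower x z / Rpower y z.
Proof. intros. unfold Rpower, Rdiv. rewrite ln_mult, ln_Rinv by (try apply Rinv_0_lt_compat; lra).
rewrite <- exp_Ropp. rewrite <- exp_plus. f_equal. ring. Qed.

Lemma exp_convex t X Y : 0 <= t <= 1 ->
  exp (t * X + (1 - t) * Y) <= t * exp X + (1 - t) * exp Y.
Proof. intros Ht. set (M := t * X + (1 - t) * Y).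
assert (E1 : exp X = exp M * exp (X - M)) by (rewrite <- exp_plus; f_equal; ring).
assert (E2 : exp Y = exp M * exp (Y - M)) by (rewrite <- exp_plus; f_equal; ring).
pose proof (exp_ineq1_le (X - M)). pose proof (exp_ineq1_le (Y - M)).
pose proof (exp_pos M).
rewrite E1, E2.
assert (t * (exp M * exp (X - M)) >= t * (exp M * (1 + (X - M)))) by
  (apply Rle_ge, Rmult_le_compat_l; [lra| apply Rmult_le_compat_l; lra]).
assert ((1-t) * (exp M * exp (Y - M)) >= (1-t) * (exp M * (1 + (Y - M)))) by
  (apply Rle_ge, Rmult_le_compat_l; [lra| apply Rmult_le_compat_l; lra]).
assert (t * (exp M * (1 + (X - M))) + (1-t) * (exp M * (1 + (Y - M))) = exp M)
  by (unfold M; ring).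
lra. Qed.

Lemma young p q al be : 1 < p -> 1 / p + 1 / q = 1 -> 0 < al -> 0 <= be ->
  al * be <= Rpower al p / p + rpow be q / q.
Proof. intros Hp Hpq Hal Hbe.
assert (Hq : 1 < q).
{ assert (0 < 1/p < 1). split. apply Rdiv_lt_0_compat; lra.
  apply (Rmult_lt_reg_r p); try lra. unfold Rdiv. rewrite Rmult_assoc, Rinv_l; lra.
  assert (0 < 1/q < 1) by lra.
  destruct (Rlt_le_dec 1 q); auto. exfalso.
  assert (q > 0). { destruct (Rle_lt_dec q 0); auto. assert (1/q <= 0).
   unfold Rdiv; rewrite Rmult_1_l. destruct r0. left; apply Rinv_lt_0_compat; auto.
   subst. rewrite Rinv_0; lra. lra. }
  assert (1 <= 1/q). unfold Rdiv. rewrite Rmult_1_l. rewrite <- Rinv_1.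
  apply Rinv_le_contravar; lra. lra. }
destruct (Req_EM_T be 0).
- subst. rewrite rpow_0 by lra. rewrite Rmult_0_r.
  pose proof (Rpower_pos al p). unfold Rdiv. rewrite Rmult_0_l, Rplus_0_r.
  left; apply Rmult_lt_0_compat; auto. apply Rinv_0_lt_compat; lra.
- rewrite rpow_pos by lra.
  assert (E : al * be = exp ((1/p) * (p * ln al) + (1 - 1/p) * (q * ln be))).
  { replace (1 - 1/p) with (1/q) by lra.
    replace (1 / p * (p * ln al) + 1 / q * (q * ln be)) with (ln al + ln be) by (field; lra).
    rewrite exp_plus, !exp_ln; lra. }
  rewrite E.
  eapply Rle_trans. apply exp_convex.
  split. left; apply Rdiv_lt_0_compat; lra.
  assert (1/p < 1). apply (Rmult_lt_reg_r p); try lra. unfold Rdiv. rewrite Rmult_assoc, Rinv_l; lra. lra.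
  unfold Rpower. replace (1 - 1/p) with (1/q) by lra. unfold Rdiv. lra.
Qed.

Lemma key_mvt g G g' G' a b : a < b ->
  (forall c, a <= c <= b -> derivable_pt_lim g c (g' c)) ->
  (forall c, a <= c <= b -> derivable_pt_lim G c (G' c)) ->
  (forall c, a <= c <= b -> Rabs (g' c) <= G' c) ->
  Rabs (g b - g a) <= G b - G a.
Proof. intros Hab Hg HG Hb.
destruct (MVT_cor2 (fun x => G x - g x) (fun x => G' x - g' x) a b Hab) as [c1 [E1 H1]].
{ intros c Hc. apply derivable_pt_lim_minus; auto. }
destruct (MVT_cor2 (fun x => G x + g x) (fun x => G' x + g' x) a b Hab) as [c2 [E2 H2]].
{ intros c Hc. apply derivable_pt_lim_plus; auto. }
assert (B1 := Hb c1 ltac:(lra)). assert (B2 := Hb c2 ltac:(lra)).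
apply Rabs_le. apply Rabs_le_between in B1. apply Rabs_le_between in B2.
assert (0 <= (G' c1 - g' c1) * (b - a)) by (apply Rmult_le_pos; lra).
assert (0 <= (G' c2 + g' c2) * (b - a)) by (apply Rmult_le_pos; lra).
lra. Qed.

Lemma h_cont f df z (Hd: forall x, 0<x -> derivable_pt_lim f x (df x)) : 0 < z ->
  continuous (fun t => t * f t) z.
Proof. intros Hz. apply continuity_pt_filterlim.
apply derivable_continuous_pt. exists (1 * f z + z * df z).
exact (derivable_pt_lim_mult id f z 1 (df z) (derivable_pt_lim_id z) (Hd z Hz)). Qed.

Lemma g_deriv f df a (Hd: forall x, 0<x -> derivable_pt_lim f x (df x)) (Ha:0<a) c (Hc: 0<c):
 derivable_pt_lim (fun x => x^2 * f x / 2 - RInt (fun t => t * f t) a x) c (c^2 * df c / 2).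
Proof.
assert (HF : is_derive (fun x => RInt (fun t => t * f t) a x) c (c * f c)).
{ apply (is_derive_RInt (fun t => t * f t) _ a).
  - exists (mkposreal (c/2) ltac:(lra)). intros y Hy.
    assert (Hy' : Rabs (y - c) < c/2) by exact Hy.
    apply Rabs_def2 in Hy'.
    apply (RInt_correct (V:=R_CompleteNormedModule)). apply (ex_RInt_continuous (V:=R_CompleteNormedModule)). intros z Hz.
    apply (h_cont f df z Hd).
    destruct Hz as [Hz1 _]. eapply Rlt_le_trans; [|exact Hz1].
    apply Rmin_glb_lt; lra.
  - apply (h_cont f df c Hd Hc). }
apply is_derive_Reals in HF.
replace (c^2 * df c / 2) with ((2 * c * f c + c^2 * df c) / 2 - c * f c) by field.
apply (derivable_pt_lim_minus (fun x => x^2 * f x / 2) (fun x => RInt (fun t => t * f t) a x)); auto.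
apply is_derive_Reals.
apply (is_derive_ext (fun x => /2 * ((fun x => x^2) x * f x))).
{ intros t. simpl. field. }
replace ((2 * c * f c + c ^ 2 * df c) / 2) with (/2 * ((INR 2 * c ^ Nat.pred 2) * f c + c^2 * df c))
  by (simpl; field).
apply is_derive_Reals.
apply (derivable_pt_lim_scal (fun x => (fun x => x^2) x * f x)).
apply (derivable_pt_lim_mult (fun x => x^2) f).
apply derivable_pt_lim_pow. auto.
Qed.

Lemma ln_le' x y : 0 < x -> x <= y -> ln x <= ln y.
Proof. intros H [E|E]. left; apply ln_increasing; auto. subst; lra. Qed.

Lemma conv_bound (df : R -> R) a b m q
  (Ha : 0 < a) (Hab : a < b) (Hm : 0 < m <= 1)
  (Hconv : GA_convex 1 m (Rmax (rpow a (1 / m)) b) (fun x => rpow (Rabs (df x)) q))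
  x (Hx : a <= x <= b) :
  rpow (Rabs (df x)) q <=
   (ln x - ln a) / (ln b - ln a) * rpow (Rabs (df b)) q
   + m * (1 - (ln x - ln a) / (ln b - ln a)) * rpow (Rabs (df (rpow a (1/m)))) q.
Proof.
set (l := ln b - ln a).
assert (Hl : 0 < l) by (unfold l; pose proof (ln_increasing a b Ha Hab); lra).
set (lam := (ln x - ln a) / l).
assert (Hla : ln a <= ln x) by (apply ln_le'; lra).
assert (Hlb : ln x <= ln b) by (apply ln_le'; lra).
assert (Hlam : 0 <= lam <= 1).
{ unfold lam; split. unfold Rdiv; apply Rmult_le_pos; [lra| left; apply Rinv_0_lt_compat; lra].
  apply (Rmult_le_reg_r l); auto. unfold Rdiv. rewrite Rmult_assoc, Rinv_l by lra. unfold l in *; lra. }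
assert (Hy : 0 < rpow a (1/m)) by (rewrite rpow_pos by lra; apply Rpower_pos).
specialize (Hconv b (rpow a (1/m)) lam).
rewrite (rpow_id1 lam) in Hconv by lra.
replace (rpow b lam * rpow (rpow a (1 / m)) (m * (1 - lam))) with x in Hconv.
- apply Hconv.
  + split. lra. apply Rmax_r.
  + split. lra. apply Rmax_l.
  + auto.
- rewrite !rpow_pos by (try apply Rpower_pos; lra).
  rewrite Rpower_mult. unfold Rpower. rewrite <- exp_plus.
  replace (lam * ln b + 1 / m * (m * (1 - lam)) * ln a) with (ln x).
  rewrite exp_ln; lra.
  unfold lam, l in *. field. lra.
Qed.

Theorem corollary3p4 (f df : R -> R) (a b m q : R)
  (Hd0 : right_derivative f 0 (df 0))
  (Hd : forall x, 0 < x -> derivable_pt_lim f x (df x))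
  (Ha : 0 < a) (Hab : a < b)
  (Hm : 0 < m <= 1) (Hq : 1 < q)
  (Hconv : GA_convex 1 m (Rmax (rpow a (1 / m)) b) (fun x => rpow (Rabs (df x)) q))
  (pr : Riemann_integrable (fun x => x * f x) a b) :
  Rabs ((b ^ 2 * f b - a ^ 2 * f a) / 2 - RiemannInt pr)
    <= (ln b - ln a) / rpow 2 (1 + 1 / q)
       * rpow (logmean (rpow a (3 * q / (q - 1))) (rpow b (3 * q / (q - 1)))) (1 - 1 / q)
       * rpow (rpow (Rabs (df b)) q + m * rpow (Rabs (df (rpow a (1 / m)))) q) (1 / q).
Proof.
set (g := fun x => x^2 * f x / 2 - RInt (fun t => t * f t) a x).
assert (Eg : (b ^ 2 * f b - a ^ 2 * f a) / 2 - RiemannInt pr = g b - g a).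
{ unfold g. rewrite <- (RInt_Reals _ _ _ pr).
  assert (RInt (fun t => t*f t) a a = 0) as -> by apply (RInt_point (V:=R_CompleteNormedModule)).
  simpl. set (I := RInt (fun t => t * f t) a b). change ((b * (b * 1) * f b - a * (a * 1) * f a) / 2 - I =
  b * (b * 1) * f b / 2 - I - (a * (a * 1) * f a / 2 - 0)). lra. }
rewrite Eg.
assert (Hg : forall c, a <= c <= b -> derivable_pt_lim g c (c^2 * df c / 2)).
{ intros c Hc. apply g_deriv; auto; lra. }
set (l := ln b - ln a).
assert (Hl : 0 < l) by (unfold l; pose proof (ln_increasing a b Ha Hab); lra).
set (A := rpow (Rabs (df b)) q).
set (B := rpow (Rabs (df (rpow a (1/m)))) q).
assert (HA : 0 <= A) by (apply rpow_ge0, Rabs_pos).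
assert (HB : 0 <= B) by (apply rpow_ge0, Rabs_pos).
assert (Hbd := conv_bound df a b m q Ha Hab Hm Hconv).
fold l A B in Hbd.
set (K := A + m * B).
destruct (Req_EM_T K 0) as [HK|HK].
-
  assert (A = 0 /\ B = 0) as [HA0 HB0].
  { unfold K in HK. assert (0 <= m * B) by (apply Rmult_le_pos; lra).
    split. lra. assert (m * B = 0) by lra. apply Rmult_integral in H0. lra. }
  rewrite HK, rpow_0.
  2:{ unfold Rdiv; rewrite Rmult_1_l. apply Rinv_neq_0_compat. lra. }
  rewrite Rmult_0_r.
  replace 0 with ((fun _ : R => 0) b - (fun _ : R => 0) a) by (simpl; ring).
  apply (key_mvt g (fun _ => 0) (fun c => c^2 * df c / 2) (fun _ => 0) a b Hab Hg).
  + intros c _. apply derivable_pt_lim_const.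
  + intros c Hc. specialize (Hbd c Hc). rewrite HA0, HB0 in Hbd.
    assert (rpow (Rabs (df c)) q = 0).
    { apply Rle_antisym. lra. apply rpow_ge0, Rabs_pos. }
    apply rpow_eq0 in H; try apply Rabs_pos; try lra.
    replace (c ^ 2 * df c / 2) with 0. rewrite Rabs_R0; lra.
    assert (df c = 0) by (destruct (Req_EM_T (df c) 0); auto; apply Rabs_no_R0 in n; lra).
    rewrite H0; field.
- assert (HK0 : 0 < K).
  { assert (0 <= K) by (unfold K; assert (0 <= m * B) by (apply Rmult_le_pos; lra); lra).
    destruct H; auto. congruence. }
  set (p := q / (q - 1)).
  set (s := 3 * q / (q - 1)).
  assert (Hp : 1 < p). { replace p with (1 + 1/(q-1)) by (unfold p; field; lra).
    assert (0 < 1/(q-1)) by (apply Rdiv_lt_0_compat; lra). lra. }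
  assert (Hpq : 1 / p + 1 / q = 1). { unfold p. field. lra. }
  assert (Hs : s = 3 * p) by (unfold s, p; field; lra).
  assert (Hs0 : 0 < s) by lra.
  set (Pu := (Rpower b s - Rpower a s) / s).
  assert (Hbs : Rpower a s < Rpower b s) by (apply Rlt_Rpower_l; lra).
  assert (HPu : 0 < Pu) by (unfold Pu; apply Rdiv_lt_0_compat; lra).
  set (Pv := l * K / 2).
  assert (HPv : 0 < Pv) by (unfold Pv; apply Rdiv_lt_0_compat; [apply Rmult_lt_0_compat|]; lra).
  set (U := Rpower Pu (1/p)). set (V := Rpower Pv (1/q)).
  assert (HU : 0 < U) by apply Rpower_pos. assert (HV : 0 < V) by apply Rpower_pos.
  assert (HUp : Rpower U p = Pu). { unfold U. rewrite Rpower_mult. replace (1/p*p) with 1 by (field; lra). apply Rpower_1; auto. }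
  assert (HVq : Rpower V q = Pv). { unfold V. rewrite Rpower_mult. replace (1/q*q) with 1 by (field; lra). apply Rpower_1; auto. }
  set (W := U * V / 2).
  set (G := fun x => W / (p * Pu) * (Rpower x s / s) + W / (q * Pv) * (m * B * (ln x - ln a) + (A - m * B) / (2 * l) * (ln x - ln a) ^ 2)).
  set (G' := fun x => W / (p * Pu) * (Rpower x s / x) + W / (q * Pv) * (m * B / x + (A - m * B) / l * (ln x - ln a) / x)).
  assert (HGb : G b - G a = W).
  { unfold G. fold l. replace (ln a - ln a) with 0 by ring.
    replace (Rpower b s / s) with (Pu + Rpower a s / s) by (unfold Pu; field; lra).
    transitivity (W * (1/p + 1/q)); [|rewrite Hpq; lra].
    unfold Pv. clearbody W Pu. unfold K in *. field. repeat split; lra. }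
  assert (HW : W = l / rpow 2 (1 + 1 / q)
       * rpow (logmean (rpow a s) (rpow b s)) (1 - 1 / q)
       * rpow K (1 / q)).
  { set (LM := logmean (rpow a s) (rpow b s)).
    assert (HLM : LM = Pu / l).
    { unfold LM, logmean. rewrite !rpow_pos by (try apply Rpower_pos; lra). rewrite !ln_Rpower. unfold Pu. unfold l in *.
      replace (s * ln b - s * ln a) with (s * (ln b - ln a)) by ring.
      field. lra. }
    assert (HLM0 : 0 < LM) by (rewrite HLM; apply Rdiv_lt_0_compat; lra).
    rewrite !rpow_pos by lra.
    replace (1 - 1/q) with (1/p) by lra.
    rewrite Rpower_plus, Rpower_1 by lra.
    unfold W, U, V.
    replace Pu with (l * LM) by (rewrite HLM; field; lra).
    unfold Pv.
    rewrite <- (Rpower_mult_distr l LM) by lra.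
    rewrite Rpower_div by (try apply Rmult_lt_0_compat; lra).
    rewrite <- (Rpower_mult_distr l K) by lra.
    assert (El : Rpower l (1/p) * Rpower l (1/q) = l).
    { rewrite <- Rpower_plus, Hpq. apply Rpower_1; lra. }
    pose proof (Rpower_pos 2 (1/q)).
    set (x1 := Rpower l (1/p)) in *. set (x2 := Rpower l (1/q)) in *. rewrite <- El. field. lra. }
  rewrite <- HW, <- HGb.
  apply (key_mvt g G (fun c => c^2 * df c / 2) G' a b Hab Hg).
  + intros c Hc. assert (Hc0 : 0 < c) by lra. apply is_derive_Reals.
    unfold G, G'. unfold Rpower. clearbody W Pu Pv l. auto_derive. auto.
    replace (exp ((s - 1) * ln c)) with (exp (s * ln c) / c).
    field. repeat split; lra.
    replace ((s-1) * ln c) with (s * ln c + - ln c) by ring. rewrite exp_plus, exp_Ropp, exp_ln by lra.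
    field. lra.
  + intros c Hc. assert (Hc0 : 0 < c) by lra.
    specialize (Hbd c Hc).
    set (lam := (ln c - ln a) / l) in *.
    assert (Hlam : 0 <= lam <= 1).
    { assert (ln a <= ln c) by (apply ln_le'; lra).
      assert (ln c <= ln b) by (apply ln_le'; lra).
      unfold lam; split. unfold Rdiv; apply Rmult_le_pos; [lra| left; apply Rinv_0_lt_compat; lra].
      apply (Rmult_le_reg_r l); auto. unfold Rdiv. rewrite Rmult_assoc, Rinv_l by lra. unfold l in *; lra. }
    set (phi := lam * A + m * (1 - lam) * B) in *.
    assert (Hphi : 0 <= phi).
    { unfold phi. assert (0 <= lam * A) by (apply Rmult_le_pos; lra).
      assert (0 <= m * (1 - lam) * B) by (apply Rmult_le_pos; [apply Rmult_le_pos|]; lra). lra. }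
    set (v := Rabs (df c)) in *.
    assert (Hv : 0 <= v) by apply Rabs_pos.
    set (al := c ^ 3 / U). set (be := v / V).
    assert (Hal : 0 < al) by (unfold al; apply Rdiv_lt_0_compat; [apply pow_lt|]; lra).
    assert (Hbe : 0 <= be) by (unfold be; unfold Rdiv; apply Rmult_le_pos; [lra| left; apply Rinv_0_lt_compat; lra]).
    assert (Y := young p q al be Hp Hpq Hal Hbe).
    assert (E1 : Rpower al p = Rpower c s / Pu).
    { unfold al. rewrite Rpower_div by (try apply pow_lt; lra). rewrite HUp.
      rewrite <- (Rpower_pow 3 c) by lra. rewrite Rpower_mult. rewrite Hs. simpl INR.
      replace (1 + 1 + 1) with 3 by ring. reflexivity. }
    assert (E2 : rpow be q <= phi / Pv).
    { destruct (Req_EM_T v 0) as [Hv0|Hv0].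
      - unfold be. rewrite Hv0. unfold Rdiv at 1. rewrite Rmult_0_l, rpow_0 by lra.
        unfold Rdiv; apply Rmult_le_pos; [lra| left; apply Rinv_0_lt_compat; lra].
      - assert (Hv1 : 0 < v) by (destruct Hv; auto; congruence).
        unfold be. rewrite rpow_pos by (apply Rdiv_lt_0_compat; lra).
        rewrite Rpower_div by lra. rewrite HVq. rewrite <- (rpow_pos v q) by lra.
        unfold Rdiv. apply Rmult_le_compat_r. left; apply Rinv_0_lt_compat; lra. lra. }
    assert (EL : Rabs (c ^ 2 * df c / 2) = (U * V / (2 * c)) * (al * be)).
    { unfold Rdiv. rewrite !Rabs_mult, Rabs_inv, (Rabs_pos_eq (c^2)), (Rabs_pos_eq 2) by (try apply pow_le; lra).
      fold v. unfold al, be. field. repeat split; lra. }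
    rewrite EL.
    assert (HC : 0 < U * V / (2 * c)) by (apply Rdiv_lt_0_compat; [apply Rmult_lt_0_compat|]; lra).
    apply Rle_trans with ((U * V / (2 * c)) * (Rpower c s / Pu / p + phi / Pv / q)).
    { apply Rmult_le_compat_l; [lra|]. rewrite <- E1.
      eapply Rle_trans; [exact Y|]. apply Rplus_le_compat_l.
      unfold Rdiv at 1 3. apply Rmult_le_compat_r. left; apply Rinv_0_lt_compat; lra. auto. }
    right. unfold G', phi, lam, W. field. repeat split; lra.
Qed.
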